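(* Let $(\varepsilon_i)_{i\ge0}$ and $(\varepsilon'_i)_{i\ge0}$ belong to $\mathcal{D}^\infty$. Then $$\Big|\sum_{i=0}^{\infty}(\varepsilon_i-\varepsilon'_i)\beta_2^i\Big|\le\frac{1}{1+\beta_2},\qquad \Big|\sum_{i=0}^{\infty}(\varepsilon_i-\varepsilon'_i)\beta_3^i\Big|\le\frac{C}{1-|\beta_3|^6},$$ where $C=\max\{|\sum_{i=0}^5(c_i-d_i)\beta_3^i| : (c_i)_{0\le i\le5},(d_i)_{0\le i\le5}\in\mathcal{D}\}$.
   Context: Let $P(x)=x^4-x^3-x^2-x-1$. Its roots are $\beta_1\approx 1.9275$, a real root $\beta_2\approx-0.7748$, and a pair of complex conjugate roots $\beta_3\approx-0.0763+0.8147i$ and $\overline{\beta_3}$. $\mathcal{D}$ denotes the set of finite $0/1$ words containing no four consecutive $1$'s, and $\mathcal{D}^\infty$ the set of sequences $(\varepsilon_i)_{i\ge l}$, $l\in\mathbb{Z}$, with $\varepsilon_i\in\{0,1\}$ and containing no four consecutive $1$'s. *)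

(* Defs.v *)
From Stdlib Require Import Reals List.
From Coquelicot Require Import Coquelicot.
Open Scope R_scope.

Definition P_R (x : R) : R := x^4 - x^3 - x^2 - x - 1.
Definition P_C (z : C) : C :=
  (pow_n (K:=C_Ring) z 4 - pow_n (K:=C_Ring) z 3 - pow_n (K:=C_Ring) z 2 - z - 1)%C.

Definition b2R (b : bool) : R := if b then 1 else 0.
Definition b2C (b : bool) : C := RtoC (b2R b).

Definition in_Dinf (e : nat -> bool) : Prop :=
  forall i, ~ (e i = true /\ e (i+1)%nat = true /\ e (i+2)%nat = true /\ e (i+3)%nat = true).

Fixpoint no4 (w : list bool) : bool :=
  match w with
  | true :: true :: true :: true :: _ => false
  | _ :: t => no4 t
  | nil => true
  end.

Fixpoint words (n : nat) : list (list bool) :=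
  match n with
  | O => nil :: nil
  | S m => map (cons false) (words m) ++ map (cons true) (words m)
  end.

Definition Dwords (n : nat) : list (list bool) := filter no4 (words n).

Definition wsum (c d : list bool) (z : C) : C :=
  fold_right Cplus 0%C
    (map (fun i => Cmult (b2C (nth i c false) - b2C (nth i d false))%C (pow_n (K:=C_Ring) z i))
         (seq 0 (length c))).

(* C = max { |sum_{i=0}^5 (c_i - d_i) z^i| : c, d in D of length 6 }
   (the set is nonempty and the values are >= 0, so starting the fold at 0 is harmless) *)
Definition Cmax6 (z : C) : R :=
  fold_right Rmax 0
    (flat_map (fun c => map (fun d => Cmod (wsum c d z)) (Dwords 6)) (Dwords 6)).

(* Main.v *)
Require Import Defs.
From Stdlib Require Import Reals List Lia Lra Psatz.
From Coquelicot Require Import Coquelicot.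
Open Scope R_scope.

Lemma b3_small (z : C) : P_C z = 0%C -> 0 < Im z -> Cmod z < 1.
Proof.
  destruct z as [a b]. unfold P_C, Im. simpl. intros H Hb.
  injection H as H1 H2.
  unfold Cmod; simpl.
  ring_simplify in H1. ring_simplify in H2.
  assert (Hi : 4*a^3 - 4*a*b^2 - 3*a^2 + b^2 - 2*a - 1 = 0).
  { apply (Rmult_eq_reg_l b); [|lra]. nra. }
  set (s := a^2+b^2).
  assert (E1 : s*(4*a^2-2*a-s-1) = -1) by (unfold s; nra).
  assert (E2 : -2*a*(4*a^2-2*a-s-1) + s*(2*a-1) = -1) by (unfold s; nra).
  replace (a*(a*1)+b*(b*1)) with s by (unfold s; ring).
  apply Rlt_le_trans with (sqrt 1); [apply sqrt_lt_1_alt|rewrite sqrt_1; lra].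
  split; [unfold s; nra|].
  destruct (Rlt_or_le s 1) as [h|h]; [exact h|exfalso].
  assert (Ea : 2*a*(1+s^2) = s^2 - s) by nra.
  assert (a >= 0) by nra.
  assert (2*a < 1) by nra.
  nra.
Qed.

Lemma b2R_diff_le (x y : bool) : Rabs (b2R x - b2R y) <= 1.
Proof. destruct x, y; unfold b2R; apply Rabs_le; lra. Qed.

Lemma b2C_diff (x y : bool) : Cmod (b2C x - b2C y)%C <= 1.
Proof. unfold b2C. rewrite <- RtoC_minus, Cmod_R. apply b2R_diff_le. Qed.

Lemma part1 (q : R) (e e' : nat -> bool) : Rabs q < 1 ->
  exists l : R, is_series (fun i => (b2R (e i) - b2R (e' i)) * q ^ i) l
      /\ Rabs l <= / (1 - Rabs q).
Proof.
  intros Hq.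
  set (a := fun i => (b2R (e i) - b2R (e' i)) * q ^ i).
  assert (Hb : forall n, Rabs (a n) <= Rabs q ^ n).
  { intro n. unfold a. rewrite Rabs_mult, RPow_abs.
    pose proof (b2R_diff_le (e n) (e' n)). pose proof (Rabs_pos (q^n)). nra. }
  assert (Hg : is_series (fun n => Rabs q ^ n) (/ (1 - Rabs q))).
  { apply is_series_geom. rewrite Rabs_Rabsolu. exact Hq. }
  assert (Ea : ex_series (fun n => Rabs (a n))).
  { apply (ex_series_le (V:=R_CompleteNormedModule) _ (fun n => Rabs q ^ n)).
    - intro n. change (norm (Rabs (a n))) with (Rabs (Rabs (a n))). rewrite Rabs_Rabsolu. apply Hb.
    - eexists; exact Hg. }
  assert (Ea2 : ex_series a).
  { apply (ex_series_le (V:=R_CompleteNormedModule) _ (fun n => Rabs q ^ n)).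
    - intro n. apply Hb.
    - eexists; exact Hg. }
  exists (Series a). split.
  - apply Series_correct. exact Ea2.
  - eapply Rle_trans. apply Series_Rabs. exact Ea.
    rewrite <- (is_series_unique _ _ Hg).
    apply Series_le. intro n. split. apply Rabs_pos. apply Hb. eexists; exact Hg.
Qed.

Lemma pow_n_C (z : C) n : pow_n (K:=C_Ring) z n = Cpow z n.
Proof. induction n; simpl; [reflexivity|]. rewrite IHn. reflexivity. Qed.

Lemma fold_Rmax_in (l : list R) x : In x l -> x <= fold_right Rmax 0 l.
Proof. induction l; simpl; [tauto|]. intros [<-|H].
  apply Rmax_l. eapply Rle_trans; [apply IHl; exact H|apply Rmax_r]. Qed.

Lemma fold_Rmax_pos (l : list R) : 0 <= fold_right Rmax 0 l.
Proof. induction l; simpl; [lra|]. eapply Rle_trans; [exact IHl|apply Rmax_r]. Qed.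

Lemma words_complete n (l : list bool) : length l = n -> In l (words n).
Proof.
  revert l; induction n; intros l Hl; destruct l; simpl in *; try discriminate.
  - left; reflexivity.
  - injection Hl as Hl. apply in_or_app. destruct b; [right|left]; apply in_map; auto.
Qed.

Definition blk (e : nat -> bool) (k : nat) : list bool :=
  e k :: e (S k) :: e (S (S k)) :: e (S (S (S k))) :: e (S (S (S (S k))))
    :: e (S (S (S (S (S k))))) :: nil.

Lemma blk_in (e : nat -> bool) k : in_Dinf e -> In (blk e k) (Dwords 6).
Proof.
  intros he. unfold Dwords. apply filter_In. split.
  - apply words_complete. reflexivity.
  - pose proof (he k) as h0. pose proof (he (S k)) as h1. pose proof (he (S (S k))) as h2.
    replace (k+1)%nat with (S k) in h0 by lia.
    replace (k+2)%nat with (S (S k)) in h0 by lia.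
    replace (k+3)%nat with (S (S (S k))) in h0 by lia.
    replace (S k+1)%nat with (S (S k)) in h1 by lia.
    replace (S k+2)%nat with (S (S (S k))) in h1 by lia.
    replace (S k+3)%nat with (S (S (S (S k)))) in h1 by lia.
    replace (S (S k)+1)%nat with (S (S (S k))) in h2 by lia.
    replace (S (S k)+2)%nat with (S (S (S (S k)))) in h2 by lia.
    replace (S (S k)+3)%nat with (S (S (S (S (S k))))) in h2 by lia.
    unfold blk. revert h0 h1 h2.
    destruct (e k), (e (S k)), (e (S (S k))), (e (S (S (S k)))),
      (e (S (S (S (S k))))), (e (S (S (S (S (S k)))))); simpl; intros;
      first [reflexivity | exfalso; intuition].
Qed.

Lemma wsum_le_Cmax6 (e e' : nat -> bool) k z : in_Dinf e -> in_Dinf e' ->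
  Cmod (wsum (blk e k) (blk e' k) z) <= Cmax6 z.
Proof.
  intros he he'. unfold Cmax6. apply fold_Rmax_in. apply in_flat_map.
  exists (blk e k). split. apply blk_in; auto. apply (in_map (fun d => Cmod (wsum (blk e k) d z))). apply blk_in; auto.
Qed.

Definition fC (e e' : nat -> bool) (z : C) (i : nat) : C :=
  Cmult (b2C (e i) - b2C (e' i))%C (pow_n (K:=C_Ring) z i).

Lemma blk_step e e' z n :
  sum_n (fC e e' z) (n + 6) =
  Cplus (sum_n (fC e e' z) n) (Cmult (pow_n (K:=C_Ring) z (S n)) (wsum (blk e (S n)) (blk e' (S n)) z)).
Proof.
  replace (n+6)%nat with (S (S (S (S (S (S n)))))) by lia.
  rewrite !sum_Sn. unfold fC, wsum, blk. simpl.
  rewrite ?pow_n_C. unfold plus, mult, one, zero; simpl. match goal with |- ?a = ?b => change (@eq C a b) end. ring.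
Qed.

Lemma blk_base e e' z :
  sum_n (fC e e' z) 5 = wsum (blk e 0) (blk e' 0) z.
Proof.
  rewrite !sum_Sn, sum_O. unfold fC, wsum, blk. simpl.
  rewrite ?pow_n_C. unfold plus, mult, one, zero; simpl. match goal with |- ?a = ?b => change (@eq C a b) end. ring.
Qed.

Lemma partial_bound e e' z N : in_Dinf e -> in_Dinf e' -> Cmod z < 1 ->
  Cmod (sum_n (fC e e' z) (6*N+5)) <=
  Cmax6 z * (1 - (Cmod z ^ 6) ^ (S N)) / (1 - Cmod z ^ 6).
Proof.
  intros he he' Hz.
  set (r := Cmod z). set (q := r ^ 6).
  assert (Hr : 0 <= r) by apply Cmod_ge_0.
  assert (Hq0 : 0 <= q) by (apply pow_le; exact Hr).
  assert (Hq1 : q < 1) by (destruct (pow_lt_1_compat r 6 (conj Hr Hz) ltac:(lia)) as [_ Hx]; exact Hx).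
  assert (HC : 0 <= Cmax6 z) by apply fold_Rmax_pos.
  induction N.
  - replace (6*0+5)%nat with 5%nat by lia. rewrite blk_base.
    replace (Cmax6 z * (1 - q ^ 1) / (1 - q)) with (Cmax6 z) by (field; lra).
    apply wsum_le_Cmax6; auto.
  - replace (6 * S N + 5)%nat with ((6*N+5)+6)%nat by lia.
    rewrite blk_step.
    eapply Rle_trans; [apply Cmod_triangle|].
    rewrite Cmod_mult, pow_n_C, Cmod_pow. fold r.
    replace (r ^ S (6*N+5)) with (q ^ S N) by
      (unfold q; rewrite <- pow_mult; f_equal; lia).
    pose proof (wsum_le_Cmax6 e e' (S (6*N+5)) z he he').
    assert (0 <= q ^ S N) by (apply pow_le; lra).
    apply Rle_trans with (Cmax6 z * (1 - q ^ S N) / (1 - q) + q ^ S N * Cmax6 z).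
    + apply Rplus_le_compat; [exact IHN| apply Rmult_le_compat_l; auto].
    + right. change (q ^ S (S N)) with (q * q ^ S N). field. lra.
Qed.

Theorem lemma3p2 (beta2 : R) (beta3 : C)
  (h2root : P_R beta2 = 0) (h2neg : beta2 < 0)
  (h3root : P_C beta3 = 0%C) (h3im : 0 < Im beta3)
  (e e' : nat -> bool) (he : in_Dinf e) (he' : in_Dinf e') :
  (exists l : R,
      is_series (fun i => (b2R (e i) - b2R (e' i)) * beta2 ^ i) l
      /\ Rabs l <= 1 / (1 + beta2))
  /\
  (exists l : C,
      is_series (V:=C_NormedModule)
        (fun i => Cmult (b2C (e i) - b2C (e' i))%C (pow_n (K:=C_Ring) beta3 i)) l
      /\ Cmod l <= Cmax6 beta3 / (1 - Cmod beta3 ^ 6)).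
Proof.
  split.
  - assert (Hgt : -1 < beta2).
    { unfold P_R in h2root. destruct (Rle_or_lt beta2 (-1)) as [h|h]; [|exact h].
      exfalso. nra. }
    assert (Ha : Rabs beta2 = - beta2) by (apply Rabs_left; exact h2neg).
    destruct (part1 beta2 e e') as [l [H1 H2]]. rewrite Ha; lra.
    exists l. split; [exact H1|]. rewrite Ha in H2.
    replace (1 / (1 + beta2)) with (/ (1 - - beta2)) by (field; lra). exact H2.
  - pose proof (b3_small beta3 h3root h3im) as Hz.
    set (r := Cmod beta3) in *.
    assert (Hr : 0 <= r) by apply Cmod_ge_0.
    assert (Hb : forall n, norm (fC e e' beta3 n) <= r ^ n).
    { intro n. change (norm (fC e e' beta3 n)) with (Cmod (fC e e' beta3 n)).
      unfold fC. rewrite Cmod_mult, pow_n_C, Cmod_pow. fold r.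
      pose proof (b2C_diff (e n) (e' n)). pose proof (pow_le r n Hr). nra. }
    assert (Ex : ex_series (V:=C_CompleteNormedModule) (fC e e' beta3)).
    { apply (ex_series_le (V:=C_CompleteNormedModule) _ (fun n => r ^ n)).
      - exact Hb.
      - eexists. apply is_series_geom. rewrite Rabs_pos_eq; auto. }
    destruct Ex as [l Hl].
    exists l. split; [exact Hl|].
    set (q := r ^ 6).
    assert (Hq0 : 0 <= q) by (apply pow_le; exact Hr).
    assert (Hq1 : q < 1) by (destruct (pow_lt_1_compat r 6 (conj Hr Hz) ltac:(lia)) as [_ Hx]; exact Hx).
    assert (HC : 0 <= Cmax6 beta3) by apply fold_Rmax_pos.
    assert (Hidx : filterlim (fun N => (6*N+5)%nat) eventually eventually).
    { intros P [N0 HN]. exists N0. intros n Hn. apply HN. lia. }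
    assert (Hsub := filterlim_comp _ _ _ _ _ _ _ _ Hidx Hl).
    assert (Hn := filterlim_comp _ _ _ _ _ _ _ _ Hsub (filterlim_norm l)).
    assert (Hle := is_lim_seq_le
      (fun N => norm (sum_n (fC e e' beta3) (6*N+5))) (fun _ => Cmax6 beta3 / (1 - q))
      (norm l) (Cmax6 beta3 / (1 - q))).
    simpl in Hle. apply Hle.
    + intro N. change (norm (sum_n (fC e e' beta3) (6*N+5))) with (Cmod (sum_n (fC e e' beta3) (6*N+5))).
      eapply Rle_trans; [apply partial_bound; auto|].
      fold r q. unfold Rdiv. apply Rmult_le_compat_r.
      * left. apply Rinv_0_lt_compat. lra.
      * assert (0 <= q ^ S N) by (apply pow_le; lra). nra.
    + exact Hn.
    + apply is_lim_seq_const.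
Qed.
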